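(* Let $G$ be a periodic group such that the set of primes dividing the orders of elements of $G$ is exactly $\{2,3\}$, for any two elements $g,h\in G$ of orders at most $4$ the order of $gh$ is at most $9$, and the centralizer of every involution of $G$ is a locally cyclic $2$-group. Let $x\in G$ have order $3$ and $a\in G$ have order $2$ with $a^{-1}xa=x^{-1}$. Then $C_G(x)$ is an abelian $3$-group of exponent at most $9$, and $a$ acts on $C_G(x)$ by inversion (i.e. $a^{-1}ca=c^{-1}$ for all $c\in C_G(x)$). *)

(* Defs.v *)
From HB Require Import structures.
From mathcomp Require Import all_boot monoid.
Set Implicit Arguments. Unset Strict Implicit. Unset Printing Implicit Defensive.
Local Open Scope group_scope.

Section Defs.
Variable G : groupType.

Definition order_is (x : G) (n : nat) : Prop :=
  (0 < n)%N /\ x ^+ n = 1 /\ forall m, (0 < m)%N -> x ^+ m = 1 -> (n <= m)%N.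

Definition periodic : Prop := forall x : G, exists n, order_is x n.

Definition centralizer (x : G) : G -> Prop := fun c => c * x = x * c.

Definition p_elt (p : nat) (x : G) : Prop := exists k, x ^+ (p ^ k) = 1.

Inductive gen (s : seq G) : G -> Prop :=
| gen_mem x : x \in s -> gen s x
| gen_one : gen s 1
| gen_mul x y : gen s x -> gen s y -> gen s (x * y)
| gen_inv x : gen s x -> gen s (x ^-1).

Definition locally_cyclic (H : G -> Prop) : Prop :=
  forall s : seq G, (forall y, y \in s -> H y) ->
  exists z, gen s z /\ forall y, gen s y -> exists k, y = z ^+ k \/ y = (z ^+ k)^-1.

End Defs.

(* Main.v *)
Require Import Defs.
From HB Require Import structures.
From mathcomp Require Import all_boot monoid.
Local Open Scope group_scope.

Section Help.
Variable G : groupType.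
Implicit Types y z : G.

Lemma ord_dvd y n m : order_is y n -> y ^+ m = 1 -> (n %| m)%N.
Proof.
move=> [n0 [yn ymin]] ym.
have E : y ^+ (m %% n) = 1.
  move: ym; rewrite {1}(divn_eq m n) expgnDr mulnC expgnA yn expg1n mul1g.
  by [].
case: (posnP (m %% n)) => [/eqP //|p].
by have := ymin _ p E; rewrite leqNgt ltn_mod n0.
Qed.

Lemma coprime23 y n i j : order_is y n ->
  y ^+ (2 ^ i) = 1 -> y ^+ (3 ^ j) = 1 -> y = 1.
Proof.
move=> On h2 h3.
have d2 := ord_dvd _ _ _ On h2; have d3 := ord_dvd _ _ _ On h3.
have cop : coprime (2 ^ i) (3 ^ j) by apply: coprimeXl; apply: coprimeXr.
have : (n %| gcdn (2 ^ i) (3 ^ j))%N by rewrite dvdn_gcd d2 d3.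
rewrite (eqP cop) dvdn1 => /eqP n1.
by case: On => _ []; rewrite n1.
Qed.

End Help.
Arguments ord_dvd {G y n m}.
Arguments coprime23 {G y n i j}.

Theorem lemma3 (G : groupType)
  (Hper : periodic G)
  (Hspec : forall p : nat, prime p ->
     ((exists (g : G) n, order_is g n /\ (p %| n)%N) <-> (p = 2 \/ p = 3)))
  (Hprod : forall (g h : G) (m n : nat), order_is g m -> order_is h n ->
     (m <= 4)%N -> (n <= 4)%N -> exists k, order_is (g * h) k /\ (k <= 9)%N)
  (Hinv : forall i : G, order_is i 2 ->
     (forall c, centralizer i c -> p_elt 2 c) /\ locally_cyclic (centralizer i))
  (x a : G) (Hx : order_is x 3) (Ha : order_is a 2) (Hax : a^-1 * x * a = x^-1) :
  (forall c d, centralizer x c -> centralizer x d -> c * d = d * c) /\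
  (forall c, centralizer x c -> p_elt 3 c) /\
  (exists e, (0 < e <= 9)%N /\ forall c, centralizer x c -> c ^+ e = 1) /\
  (forall c, centralizer x c -> a^-1 * c * a = c^-1).
Proof.
have x1 : x <> 1.
  move=> E; case: Hx => _ [_ H]; have := H 1%N isT; rewrite E expg1n.
  by move/(_ erefl).
have x3 : x ^+ (3 ^ 1) = 1 by case: Hx => _ [].
have C3 : forall c, centralizer x c -> p_elt 3 c.
  move=> c Hc; have [n On] := Hper c.
  have [n0 [cn cmin]] := On.
  have odd_n : ~~ (2 %| n)%N.
    apply/negP => /dvdnP [m Em].
    have m0 : (0 < m)%N by move: n0; rewrite Em muln_gt0 => /andP[].
    have t2 : (c ^+ m) ^+ 2 = 1 by rewrite -expgnA -Em.
    have t1 : c ^+ m <> 1.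
      by move=> E; have := cmin _ m0 E; rewrite Em -{2}(muln1 m) leq_pmul2l.
    have Ot : order_is (c ^+ m) 2.
      split=> //; split=> //; case=> [|[|k]] //.
    have [H2 _] := Hinv _ Ot.
    have [k xk] := H2 x (commuteX m (esym Hc)).
    have [ox Ox] := Hper x.
    by apply: x1; apply: (coprime23 Ox xk x3).
  have : 3.-nat n.
    apply/pnatP => // p pp pn.
    have [|E|E] := (Hspec p pp).1; first by exists c, n.
      by move: odd_n; rewrite -E pn.
    by rewrite E.
  by case/p_natP => k Ek; exists k; rewrite -Ek.
have a2 : a * a = 1 by case: Ha => _ [].
have aV : a^-1 = a by apply: mulg1_eq.
rewrite aV in Hax *.
have ax : a * x = x^-1 * a.
  by rewrite -Hax -!mulgA a2 mulg1.
have Sq : forall c, centralizer x c -> (c * a) ^+ 2 = 1.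
  move=> c Hc; set g := c * a.
  have cV : c * x^-1 = x^-1 * c.
    exact: commuteV Hc.
  have gx : g * x = x^-1 * g by rewrite /g -mulgA ax mulgA cV -mulgA.
  have gxV : x * g = g * x^-1.
    by apply: (mulIg x); rewrite -mulgA gx mulgA mulgV mul1g mulgVK.
  have g2x : centralizer x (g ^+ 2).
    rewrite /centralizer expg2 -mulgA gx mulgA -gxV -mulgA //.
  have [j gj] := C3 _ g2x.
  have u2 : (g ^+ (3 ^ j)) ^+ 2 = 1 by rewrite expgnAC.
  have [u1|u1] := eqVneq (g ^+ (3 ^ j)) 1.
    exfalso; apply: x1.
    have oj : odd (3 ^ j)%N by rewrite oddX orbT.
    have E : g * (g ^+ 2) ^+ (3 ^ j)%N./2 = 1.
      have Eq : ((2 * (3 ^ j)./2).+1 = 3 ^ j)%N.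
        by rewrite mul2n -[in RHS](odd_double_half (3 ^ j)%N) oj.
      by rewrite -expgnA -expgS Eq.
    have gE : g = ((g ^+ 2) ^+ (3 ^ j)%N./2)^-1 by rewrite -(mulg1_eq E) invgK.
    have gc : x * g = g * x.
      rewrite gE; apply: commuteV; exact: (commuteX _ (esym g2x)).
    have : x^-1 = x.
      by apply: (mulIg g); rewrite -gx -gc.
    move=> xx.
    have x2 : x ^+ 2 = 1 by rewrite expg2 -{1}xx mulVg.
    by case: Hx => _ [_ /(_ 2 isT x2)].
  have Ou : order_is (g ^+ (3 ^ j)) 2.
    split=> //; split=> // -[|[|k]] // _ E.
    by rewrite expg1 in E; rewrite E eqxx in u1.
  have [H2 _] := Hinv _ Ou.
  have [i gi] := H2 (g ^+ 2) (commuteX2 _ _ (commute_refl g)).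
  have [o Oo] := Hper (g ^+ 2).
  exact: (coprime23 Oo gi gj).
have Inv : forall c, centralizer x c -> a * c * a = c^-1.
  move=> c Hc; apply: esym; apply: mulg1_eq.
  by rewrite -(Sq c Hc) expg2 !mulgA.
split.
  move=> c d Hc Hd.
  have Hcd : centralizer x (c * d).
    by rewrite /centralizer -mulgA Hd mulgA Hc -mulgA.
  have E := Inv _ Hcd.
  rewrite invgM in E.
  have E2 : a * (c * d) * a = (a * c * a) * (a * d * a).
    by rewrite !mulgA -(mulgA (a * c) a a) a2 mulg1.
  rewrite E2 (Inv _ Hc) (Inv _ Hd) in E.
  by apply: invg_inj; rewrite !invgM E.
split; first exact: C3.
split; last exact: Inv.
exists 9; split=> // c Hc.
have [n On] := Hper (c * a).
have n2 : (n %| 2)%N := ord_dvd On (Sq c Hc).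
have n4 : (n <= 4)%N by exact: (leq_trans (dvdn_leq (isT : (0 < 2)%N) n2)).
have [k [Ok k9]] := Hprod (c * a) a n 2 On Ha n4 isT.
rewrite -mulgA a2 mulg1 in Ok.
have [j cj] := C3 c Hc.
have kd := ord_dvd Ok cj.
case/dvdn_pfactor: kd => // m mj Ek.
have m2 : (m <= 2)%N.
  by rewrite -(leq_exp2l _ _ (isT : (1 < 3)%N)) -Ek.
have : (k %| 9)%N by rewrite Ek; exact: (dvdn_exp2l 3 m2).
case/dvdnP => q ->.
by rewrite mulnC expgnA; case: Ok => _ [-> _]; rewrite expg1n.
Qed.
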